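(* Let $k\ge 4$ be an integer and let $\alpha_1,\ldots,\alpha_k$ be the (complex) roots of $f_k(X)=X^k-X^{k-1}-\cdots-X-1$. Then $$|\alpha_i-\alpha_j|>\frac{1}{k^{6.6}\,(\pi/e)^{k}}\qquad\text{for all }1\le i<j\le k.$$
   Context: $f_k(X)=X^k-X^{k-1}-\cdots-X-1$ is the characteristic polynomial of the $k$-generalized Fibonacci sequence; its roots are distinct. *)

(* Defs.v *)
From HB Require Import structures.
From mathcomp Require Import all_boot all_order all_algebra.
From mathcomp Require Import complex.
From mathcomp Require Import all_classical all_reals all_analysis.
Set Implicit Arguments. Unset Strict Implicit. Unset Printing Implicit Defensive.
Import Order.TTheory GRing.Theory Num.Theory.
Local Open Scope ring_scope.

Definition fk (F : nzRingType) (k : nat) : {poly F} :=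
  'X^k - \sum_(i < k) 'X^i.

(* Main.v *)
Set Warnings "-all".
Require Import Defs.
From HB Require Import structures.
From mathcomp Require Import all_boot all_order all_algebra.
From mathcomp Require Import complex.
From mathcomp Require Import all_classical all_reals all_analysis.
From mathcomp Require Import ring lra.
Import Order.TTheory GRing.Theory Num.Theory numFieldNormedType.Exports.
Local Open Scope ring_scope.
Local Open Scope complex_scope.

Lemma nc_ge0 (R : realType) (z : R[i]) : 0 <= Normc.normc z.
Proof. by case: z => x y; exact: sqrtr_ge0. Qed.

Lemma nc_gt0 (R : realType) (z : R[i]) : z != 0 -> 0 < Normc.normc z.
Proof.
move=> z0; rewrite lt_neqAle nc_ge0 andbT eq_sym.
by apply/eqP => /(@Normc.eq0_normc R) h; rewrite h eqxx in z0.
Qed.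

Lemma ncM (R : realType) (x y : R[i]) :
  Normc.normc (x * y) = Normc.normc x * Normc.normc y.
Proof. exact: Normc.normcM. Qed.

Lemma ncD (R : realType) (x y : R[i]) :
  Normc.normc (x + y) <= Normc.normc x + Normc.normc y.
Proof. exact: le_normcD. Qed.

Lemma ncN (R : realType) (x : R[i]) : Normc.normc (- x) = Normc.normc x.
Proof. exact: normcN. Qed.

Lemma ncX (R : realType) (x : R[i]) n :
  Normc.normc (x ^+ n) = Normc.normc x ^+ n.
Proof.
elim: n => [|n IH]; first by rewrite !expr0 Normc.normc1.
by rewrite !exprS ncM IH.
Qed.

Lemma ncn (R : realType) n : Normc.normc (n%:R : R[i]) = n%:R.
Proof. by rewrite normcMn Normc.normc1. Qed.

Lemma ncB (R : realType) (x y : R[i]) :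
  Normc.normc (x - y) <= Normc.normc x + Normc.normc y.
Proof. by rewrite -(ncN _ y) ncD. Qed.

Lemma ncBr (R : realType) (x y : R[i]) :
  Normc.normc x - Normc.normc y <= Normc.normc (x - y).
Proof.
have := @ncD R (x - y) y; rewrite subrK; lra.
Qed.

Lemma root_eq (R : realType) k (a : R[i]) : root (fk _ k) a -> a ^+ k * (a - 2) = -1.
Proof.
move=> /rootP; rewrite /fk hornerD hornerN hornerXn horner_sum.
under eq_bigr do rewrite hornerXn.
move=> h.
have h2 : a ^+ k - 1 = (a - 1) * \sum_(i < k) a ^+ i by rewrite subrX1.
have : (a - 1) * (a ^+ k - \sum_(i < k) a ^+ i) = 0 by rewrite h mulr0.
rewrite mulrBr -h2.
move=> e.
have -> : a ^+ k * (a - 2) = (a - 1) * a ^+ k - (a ^+ k - 1) - 1 by ring.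
by rewrite e sub0r.
Qed.

Arguments nc_ge0 {R}.
Arguments nc_gt0 {R}.
Arguments ncB {R}.
Arguments ncBr {R}.

Lemma pow32 (R : realType) n : (2 <= n)%N -> n%:R < (3/2 : R) ^+ n.
Proof.
elim: n => [//|n IH] hn.
have [n1|n2] := leqP n 1.
  have -> : n = 1%N by apply/eqP; rewrite eqn_leq n1 -ltnS hn.
  rewrite expr2; lra.
have := IH n2; rewrite exprS -natr1.
have : 2 <= n%:R :> R by rewrite ler_nat.
lra.
Qed.

Lemma Xbound (R : realType) (a b : R[i]) m : Normc.normc b <= Normc.normc a ->
  2 * Normc.normc (b ^+ m.+2 - a ^+ m.+2 - (m.+2)%:R * a ^+ m.+1 * (b - a))
  <= (m.+2)%:R * (m.+1)%:R * Normc.normc a ^+ m * Normc.normc (b - a) ^+ 2.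
Proof.
move=> hba.
elim: m => [|m IH].
  have -> : b ^+ 2 - a ^+ 2 - (0.+2)%:R * a ^+ 1 * (b - a) = (b - a) ^+ 2.
    by rewrite expr1; ring.
  rewrite ncX expr0 mulr1; lra.
set c := (m.+2)%:R : R[i].
have -> : b ^+ m.+3 - a ^+ m.+3 - (m.+3)%:R * a ^+ m.+2 * (b - a) =
  b * (b ^+ m.+2 - a ^+ m.+2 - c * a ^+ m.+1 * (b - a)) + c * a ^+ m.+1 * (b - a) ^+ 2.
  have e3 : (m.+3)%:R = (m.+2)%:R + 1 :> R[i] by rewrite natr1.
  rewrite (exprS b m.+2) (exprS a m.+2) (exprS a m.+1) e3 /c.
  ring.
set X := b ^+ m.+2 - a ^+ m.+2 - c * a ^+ m.+1 * (b - a).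
move: IH; rewrite -/X => IH.
have hX := @ncD R (b * X) (c * a ^+ m.+1 * (b - a) ^+ 2).
have ec : Normc.normc (c * a ^+ m.+1 * (b - a) ^+ 2) =
   (m.+2)%:R * (Normc.normc a * Normc.normc a ^+ m) * (Normc.normc (b - a) * Normc.normc (b - a)).
  by rewrite !ncM !ncX /c ncn exprS.
rewrite ec ncM in hX.
move: hX IH hba.
set Y := Normc.normc (_ + _).
set al := Normc.normc a.
set be := Normc.normc b.
set x := Normc.normc X.
set t := Normc.normc (b - a).
move=> hX IH hba.
have al0 : 0 <= al by exact: nc_ge0.
have x0 : 0 <= x by exact: nc_ge0.
have t0 : 0 <= t * t by apply: mulr_ge0; exact: nc_ge0.
have q0 : 0 <= al ^+ m by exact: exprn_ge0.
have h1 : be * x <= al * x by rewrite ler_wpM2r.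
have h2 : al * (2 * x) <= al * ((m.+2)%:R * (m.+1)%:R * al ^+ m * t ^+ 2)
  by rewrite ler_wpM2l.
have f2 : (m.+2)%:R = (m.+1)%:R + 1 :> R by rewrite natr1.
have f3 : (m.+3)%:R = (m.+1)%:R + 2 :> R by rewrite -natr1 -natr1 -addrA.
rewrite exprS f3 f2 expr2.
rewrite f2 expr2 in h2 hX.
move: hX h1 h2; set q := al ^+ m; set u := t * t; set M := (m.+1)%:R : R.
move=> *; nra.
Qed.

Lemma nc2 (R : realType) : Normc.normc (2 : R[i]) = 2.
Proof. exact: (@ncn R 2). Qed.

Lemma sep (R : realType) k (a b : R[i]) : (4 <= k)%N ->
  a ^+ k * (a - 2) = -1 -> b ^+ k * (b - 2) = -1 -> a != b ->
  Normc.normc b <= Normc.normc a ->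
  1 <= 6 * k%:R ^+ 2 * Normc.normc (b - a).
Proof.
case: k => [|[|m]] // hk ea eb hab hba.
have m2 : (2 <= m)%N by [].
have hm : 2 <= m%:R :> R by rewrite ler_nat.
have na0 := nc_ge0 a.
have e1 : Normc.normc a ^+ m.+2 * Normc.normc (a - 2) = 1.
  by rewrite -ncX -ncM ea ncN Normc.normc1.
have na2 : Normc.normc (a - 2) <= Normc.normc a + 2 by rewrite -nc2 ncB.
have half : 1/2 <= Normc.normc a.
  rewrite leNgt; apply/negP => h.
  have q1 : Normc.normc a ^+ m <= 1 by rewrite exprn_ile1 //; lra.
  have q0 : 0 <= Normc.normc a ^+ m by exact: exprn_ge0.
  move: e1; rewrite exprSr exprS.
  have v0 := nc_ge0 (a - 2).
  move: (Normc.normc (a - 2)) (Normc.normc a) q1 q0 v0 na2 h na0.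
  move=> v al q1 q0 v0 na2 h na0 E; clear ea eb.
  move: (al ^+ m) q1 q0 E => u q1 q0 E.
  have s1 : al * al <= 1/4 by nra.
  have aa : 0 <= al * al by nra.
  have s2 : al * al * u <= 1/4 by nra.
  have uu : 0 <= al * al * u by nra.
  have s3 : al * al * u * v <= 1/4 * (5/2) by nra.
  have : al * al * u * v = 1 by rewrite -E; ring.
  lra.
set w := (m.+3)%:R * a - 2 * (m.+2)%:R.
have f2 : (m.+2)%:R = m%:R + 2 :> R by rewrite -addn2 natrD.
have f3 : (m.+3)%:R = m%:R + 3 :> R by rewrite -addn3 natrD.
have Lw : 1/2 <= Normc.normc w.
  rewrite leNgt; apply/negP => h.
  have ew1 : (m.+3)%:R * (a - 2) = w - 2.
    rewrite /w; have -> : (m.+3)%:R = (m.+2)%:R + 1 :> R[i] by rewrite natr1.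
    ring.
  have ew2 : (m.+3)%:R * a = w + 2 * (m.+2)%:R by rewrite /w subrK.
  have h1 : 2 - Normc.normc w <= (m.+3)%:R * Normc.normc (a - 2).
    rewrite -(ncn R m.+3) -ncM ew1 -nc2 -(ncN R (w - 2)) opprB; exact: ncBr.
  have h2 : 2 * (m.+2)%:R - Normc.normc w <= (m.+3)%:R * Normc.normc a.
    rewrite -(ncn R m.+3) -ncM ew2.
    have -> : 2 * (m.+2)%:R = Normc.normc (2 * (m.+2)%:R : R[i]).
      by rewrite ncM nc2 ncn.
    by have := ncBr (2 * (m.+2)%:R : R[i]) (- w); rewrite opprK ncN [_ + w]addrC.
  rewrite f2 f3 in h1 h2.
  clear ea eb ew1 ew2.
  have a32 : 3/2 < Normc.normc a by nra.
  have p1 : (3/2) ^+ m.+2 <= Normc.normc a ^+ m.+2.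
    by rewrite lerXn2r ?nnegrE //; lra.
  have hp := @pow32 R m.+3 isT.
  rewrite exprS f3 in hp.
  have v0 := nc_ge0 (a - 2).
  have ha : 0 <= (3/2 : R) ^+ m.+2 by exact: exprn_ge0.
  move: e1 p1 h1 hp v0 ha.
  move: (Normc.normc a ^+ m.+2) (Normc.normc (a - 2)) ((3/2 : R) ^+ m.+2) => P v T.
  move=> e1 p1 h1 hp v0 ha.
  have hv : 3/2 < (m%:R + 3) * v by lra.
  have t1 : T * (3/2) <= T * ((m%:R + 3) * v) by nra.
  have t2 : T * ((m%:R + 3) * v) <= P * ((m%:R + 3) * v) by nra.
  have : P * ((m%:R + 3) * v) = m%:R + 3 by rewrite mulrCA e1 mulr1.
  lra.
set d := b - a.
set P := a ^+ m.+1.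
set X := b ^+ m.+2 - a ^+ m.+2 - (m.+2)%:R * P * d.
have iden : d * P * w + (m.+2)%:R * P * d ^+ 2 + X * (b - 2) = 0.
  have -> : 0 = b ^+ m.+2 * (b - 2) - a ^+ m.+2 * (a - 2) by rewrite ea eb subrr.
  rewrite /X /P /w /d (exprS a m.+1).
  have -> : (m.+3)%:R = (m.+2)%:R + 1 :> R[i] by rewrite natr1.
  ring.
have iden2 : d * P * w = - ((m.+2)%:R * P * d ^+ 2 + X * (b - 2)).
  by apply/eqP; rewrite -subr_eq0 opprK addrA iden.
have hn := congr1 (@Normc.normc R) iden2.
rewrite ncN !ncM in hn.
have hb := @ncD R ((m.+2)%:R * P * d ^+ 2) (X * (b - 2)).
rewrite !ncM /P !ncX ncn -hn in hb.
have hX := @Xbound R a b m hba.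
rewrite -/d -/P -/X in hX.
have nb2 : Normc.normc (b - 2) <= 5 * Normc.normc a.
  have := ncB b 2; rewrite nc2; clear ea eb iden iden2; lra.
have dn0 : d != 0 by rewrite /d subr_eq0 eq_sym.
have t0 := nc_gt0 d dn0.
have q0 : 0 < Normc.normc a ^+ m by apply: exprn_gt0; lra.
have x0 := nc_ge0 X.
rewrite /P ncX exprS in hb.
rewrite expr2 f2.
have f1 : (m.+1)%:R = m%:R + 1 :> R by rewrite -addn1 natrD.
rewrite f1 f2 expr2 in hX.
rewrite f2 in hb.
clear ea eb iden iden2 hn.
move: hb hX nb2 t0 q0 Lw x0 half hm.
move: (Normc.normc X) (Normc.normc (b - 2)) (Normc.normc w) (Normc.normc d).
move: (Normc.normc a) (m%:R : R) => al M x bb L t.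
move=> hb hX nb2 t0 q0 Lw x0 half hm.
have s1 : x * bb <= x * (5 * al) by nra.
have Z0 : 0 < al * al ^+ m * t by rewrite !mulr_gt0 //; lra.
have s2 : (al * al ^+ m * t) * L <= (al * al ^+ m * t) * (t * ((M + 2) + 5/2 * (M + 2) * (M + 1))).
  nra.
rewrite ler_pM2l // in s2.
nra.
Qed.
Lemma cos_pos (R : realType) (y : R) : 0 < y -> y ^+ 2 < 2 -> 0 < cos y.
Proof.
move=> y0 y2.
have h := @cvg_cos_coeff' R y; rewrite -(cvg_lim (@Rhausdorff R) h).
apply: (@lt_trans _ _ (\sum_(0 <= i < 2) cos_coeff' y i)).
  rewrite big_nat_recr//= big_nat_recr//= big_nil add0r.
  rewrite /cos_coeff' expr0z expr1z expr0 mul1r mulN1r.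
  have -> : (1.*2)`!%:R = 2 :> R by [].
  have -> : (0.*2)`!%:R = 1 :> R by [].
  rewrite divr1; lra.
apply: lt_sum_lim_series; [by move/cvgP in h|move=> d].
rewrite /cos_coeff'.
have s1 : (-1 : R) ^ (2 + d.*2)%N = 1.
  by rewrite -exprnP -signr_odd oddD odd_double.
have s2 : (-1 : R) ^ (2 + d.*2.+1)%N = -1.
  by rewrite -exprnP -signr_odd oddD /= odd_double.
rewrite s1 s2 mul1r mulN1r.
set N := (2 + d.*2)%N.
have -> : (2 + d.*2.+1)%N = N.+1 by rewrite /N addnS.
have E1 : y ^+ (N.+1).*2 = y ^+ 2 * y ^+ N.*2.
  by rewrite -exprD add2n doubleS.
have E2 : ((N.+1).*2)`!%:R = (N.*2.+2)%:R * (N.*2.+1)%:R * (N.*2)`!%:R :> R.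
  by rewrite doubleS !factS !natrM mulrA.
rewrite E1 E2.
set F := (N.*2)`!%:R : R.
have F0 : 0 < F by rewrite ltr0n fact_gt0.
set Y := y ^+ N.*2.
have Y0 : 0 < Y by rewrite exprn_gt0.
set A := (N.*2.+2)%:R : R.
set B := (N.*2.+1)%:R : R.
have A2 : 2 <= A by rewrite /A ler_nat.
have B1 : 1 <= B by rewrite /B ler1n.
rewrite mulNr. have -> : y ^+ 2 * Y / (A * B * F) = (y ^+ 2 / (A * B)) * (Y / F).
  have An : A != 0 by apply/negP => /eqP An; rewrite An in A2; lra.
  have Bn : B != 0 by apply/negP => /eqP Bn; rewrite Bn in B1; lra.
  have Fn : F != 0 by apply/negP => /eqP Fn; rewrite Fn in F0; lra.
  field. apply/and3P; split; [exact: Fn| |]; rewrite gt_eqF //;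
    have := ler0n R N.*2; lra.
have Z0 : 0 < Y / F by rewrite divr_gt0.
have W1 : y ^+ 2 / (A * B) < 1.
  rewrite ltr_pdivrMr; last by apply: mulr_gt0; lra.
  rewrite mul1r; nra.
move: Z0 W1; set Z := Y / F; set W := y ^+ 2 / (A * B) => Z0 W1.
rewrite -[X in 0 < X - _]mul1r -mulrBl; apply: mulr_gt0 => //; lra.
Qed.

Lemma pi_sq_ge8 (R : realType) : 8 <= (pi : R) ^+ 2.
Proof.
have p0 : 0 < (pi : R) / 2 by rewrite divr_gt0 // pi_gt0.
rewrite leNgt; apply/negP => h.
have : (pi / 2) ^+ 2 < 2 :> R.
  rewrite expr_div_n; rewrite ltr_pdivrMr //; lra.
move/(@cos_pos R _ p0); rewrite cos_pihalf; lra.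
Qed.

Lemma e_le (R : realType) : expR 1 <= 28 / 10 :> R.
Proof.
set y := expR (1 / 32 : R).
have y0 : 0 < y by rewrite expR_gt0.
have h1 : y * expR (- (1/32)) = 1 by rewrite /y -expRD subrr expR0.
have h2 : 1 - 1/32 <= expR (- (1/32) : R) by have := expR_ge1Dx (- (1/32) : R); lra.
have hy : y <= 32 / 31 by nra.
have -> : expR 1 = y ^+ 32.
  by rewrite /y -expRM_natl; congr expR; field.
have e2 : y ^+ 2 <= 1066 / 1000 by rewrite expr2; nra.
have e4 : y ^+ 4 <= 1137 / 1000.
  have -> : y ^+ 4 = (y ^+ 2) * (y ^+ 2) by rewrite -exprD.
  have := exprn_ge0 2 (ltW y0); nra.
have e8 : y ^+ 8 <= 1293 / 1000.
  have -> : y ^+ 8 = (y ^+ 4) * (y ^+ 4) by rewrite -exprD.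
  have := exprn_ge0 4 (ltW y0); nra.
have e16 : y ^+ 16 <= 1672 / 1000.
  have -> : y ^+ 16 = (y ^+ 8) * (y ^+ 8) by rewrite -exprD.
  have := exprn_ge0 8 (ltW y0); nra.
have -> : y ^+ 32 = (y ^+ 16) * (y ^+ 16) by rewrite -exprD.
have := exprn_ge0 16 (ltW y0); nra.
Qed.

Lemma e_lt_pi (R : realType) : expR 1 < (pi : R).
Proof.
have := pi_sq_ge8 R; have := e_le R; have := pi_gt0 R; have := expR_gt0 (1 : R).
rewrite expr2; nra.
Qed.

Theorem theorem2 (R : realType) (k : nat) (hk : (4 <= k)%N)
  (a b : R[i]) (ha : root (fk _ k) a) (hb : root (fk _ k) b) (hab : a != b) :
  1 / ((k%:R `^ (66 / 10 : R)) * (pi / expR 1) ^+ k) < Normc.normc (a - b).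
Proof.
have ea := @root_eq R k a ha; have eb := @root_eq R k b hb.
have key : 1 <= 6 * k%:R ^+ 2 * Normc.normc (a - b).
  case/orP: (le_total (Normc.normc a) (Normc.normc b)) => h.
    have hba : b != a by rewrite eq_sym.
    exact: (@sep R k b a hk eb ea hba h).
  have := @sep R k a b hk ea eb hab h.
  by rewrite -(@ncN R (b - a)) opprB.
have k4 : 4 <= k%:R :> R by rewrite ler_nat.
have p6 : k%:R ^+ 6 <= k%:R `^ (66 / 10 : R).
  rewrite -powR_mulrn; last by lra.
  apply: ler_powR; first by lra.
  lra.
have pe : 1 <= (pi / expR 1 : R) ^+ k.
  apply: exprn_ege1; rewrite ler_pdivlMr ?expR_gt0 // mul1r.
  exact: ltW (e_lt_pi R).
have k6 : 6 * (k%:R : R) ^+ 2 < (k%:R : R) ^+ 6.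
  have e6 : k%:R ^+ 6 = k%:R ^+ 2 * (k%:R ^+ 2 * k%:R ^+ 2) :> R by rewrite -!exprD.
  have k2 : 16 <= k%:R ^+ 2 :> R by rewrite expr2; nra.
  rewrite e6; move: k2; move: (k%:R ^+ 2 : R) => y k2.
  have y2 : 256 <= y * y by nra.
  nra.
have D0 := nc_ge0 (a - b).
have Q0 : 0 < k%:R `^ (66 / 10 : R) * (pi / expR 1) ^+ k.
  have : 0 < (k%:R : R) ^+ 6 by apply: exprn_gt0; lra.
  move=> ?; apply: mulr_gt0; lra.
rewrite ltr_pdivrMr //.
move: key p6 pe k6 D0 Q0.
move: (Normc.normc (a - b)) (k%:R `^ (66 / 10 : R)) ((pi / expR 1 : R) ^+ k) (k%:R ^+ 2 : R) (k%:R ^+ 6 : R).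
move=> D A B K2 K6 key p6 pe k6 D0 Q0.
clear ea eb.
have A0 : 0 < A by nra.
have : 6 * K2 * D <= K6 * D by nra.
have : K6 * D <= A * D by nra.
have : A * D * 1 <= A * D * B.
  apply: ler_wpM2l => //; nra.
move=> h1 h2 h3.
have : 1 <= D * (A * B) by rewrite mulrA mulrAC; lra.
nra.
Qed.
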